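(* Let $\bm F\in\mathbb{C}^{N\times N}$ be an invertible Hermitian matrix with spectral decomposition $\bm F=\sum_{i=1}^N\lambda_i\bm v_i\bm v_i^\dagger$ ($\{\bm v_i\}$ orthonormal), spectral norm $s=\|\bm F\|_*=\max_i|\lambda_i|$ and condition number $\kappa$, so that $s/\kappa\le|\lambda_i|\le s$ for all $i$. Let $\gamma>0$, $0<\epsilon\le 1$, and $h(\lambda)=\frac{\sqrt{\gamma}\lambda}{\lambda^2+\gamma}$. Let $\bm y=\sum_i\beta_i\bm v_i\in\mathbb{C}^N$ be a unit vector, and let $\overline{\lambda_1},\dots,\overline{\lambda_N}\in\mathbb{R}$ satisfy $|\overline{\lambda_i}-\lambda_i|\le \frac{s}{4\kappa}\epsilon$ for all $i$. Define $$\bm w=\frac{\sum_i\beta_i h(\overline{\lambda_i})\bm v_i}{\big\|\sum_i\beta_i h(\overline{\lambda_i})\bm v_i\big\|},\qquad \bm w^*=\frac{\sum_i\beta_i h(\lambda_i)\bm v_i}{\big\|\sum_i\beta_i h(\lambda_i)\bm v_i\big\|}.$$ Then both are well defined, $\bm w^*$ is the unit vector proportional to $(\bm F^\dagger\bm F+\gamma\bm I_N)^{-1}\bm F^\dagger\bm y$, and $\|\bm w-\bm w^*\|\le\epsilon$.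
   Context: This is the correctness part of the paper's main theorem (Theorem 2): $\bm w$ is the (normalized) output of the algorithm after post-selection, using eigenvalue estimates $\overline{\lambda_i}$, and $\bm w^*$ is the normalized optimal fit parameter of the regularized least squares problem $\min_{\bm w}\|\bm F\bm w-\bm y\|^2+\gamma\|\bm w\|^2$. Norms are Euclidean. *)

(* Defs.v *)
(* Complex numbers: an arbitrary numClosedFieldType C
   (e.g. algC); conjugate transpose is mathcomp's  M ^t*  (spectral.v). *)
From HB Require Import structures.
From mathcomp Require Import all_boot all_order all_algebra.
Set Implicit Arguments. Unset Strict Implicit. Unset Printing Implicit Defensive.
Import Order.TTheory GRing.Theory Num.Theory.
Local Open Scope ring_scope.

Definition vnorm (C : numClosedFieldType) (N : nat) (x : 'cV[C]_N) : C :=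
  sqrtC (\sum_(i < N) `|x i 0| ^+ 2).

Definition specnorm (C : numClosedFieldType) (N : nat) (lam : 'I_N -> C) : C :=
  \big[Order.max/0]_(i < N) `|lam i|.

(* condition number kappa = ||F|| * ||F^-1|| = (max_i |lambda_i|) * (max_i |lambda_i|^-1) *)
Definition condnum (C : numClosedFieldType) (N : nat) (lam : 'I_N -> C) : C :=
  specnorm lam * specnorm (fun i => (lam i)^-1).

Definition hfun (C : numClosedFieldType) (gamma lam : C) : C :=
  sqrtC gamma * lam / (lam ^+ 2 + gamma).

(* Main.v *)
Require Import Defs.
From HB Require Import structures.
From mathcomp Require Import all_boot all_order all_algebra.
From mathcomp Require Import ring.
Import Order.TTheory GRing.Theory Num.Theory.
Local Open Scope ring_scope.
Local Open Scope sesquilinear_scope.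
Set Implicit Arguments. Unset Strict Implicit.

Section Aux.
Variable C : numClosedFieldType.

Lemma sumsq_form N (x : 'cV[C]_N) : \sum_i `|x i 0| ^+ 2 = (x ^t* *m x) 0 0.
Proof. rewrite mxE; apply: eq_bigr => i _; by rewrite !mxE normCK mulrC. Qed.

Lemma vnormE N (x : 'cV[C]_N) : vnorm x = sqrtC ((x ^t* *m x) 0 0).
Proof. by rewrite /vnorm sumsq_form. Qed.

Lemma vnorm_unitary N (V : 'M[C]_N) (x : 'cV[C]_N) :
  V ^t* *m V = 1%:M -> vnorm (V *m x) = vnorm x.
Proof.
move=> HV; rewrite !vnormE trmx_mul map_mxM mulmxA -(mulmxA _ (V ^t*)) HV.
by rewrite mulmx1.
Qed.

Definition cv N (c : 'I_N -> C) : 'cV[C]_N := \col_i c i.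

Lemma vnorm_cv N (c : 'I_N -> C) : vnorm (cv c) = sqrtC (\sum_i `|c i| ^+ 2).
Proof. by rewrite /vnorm; congr sqrtC; apply: eq_bigr => i _; rewrite mxE. Qed.

Lemma cmbE N (V : 'M[C]_N) (c : 'I_N -> C) :
  \sum_i c i *: col i V = V *m cv c.
Proof.
apply/matrixP => j k; rewrite !mxE summxE; apply: eq_bigr => i _.
by rewrite !mxE mulrC.
Qed.

Lemma diag_cv N (d : 'I_N -> C) (c : 'I_N -> C) :
  diag_mx (\row_i d i) *m cv c = cv (fun i => d i * c i).
Proof. by apply/matrixP => i k; rewrite mul_diag_mx !mxE. Qed.

Lemma spec_mx N (V : 'M[C]_N) (lam : 'I_N -> C) :
  \sum_(i < N) lam i *: (col i V *m (col i V) ^t*) =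
  V *m diag_mx (\row_i lam i) *m V ^t*.
Proof.
apply/matrixP => j k; rewrite mul_mx_diag summxE !mxE; apply: eq_bigr => i _.
rewrite !mxE big_ord1 !mxE.
by rewrite mulrCA mulrA.
Qed.

Lemma bigmax_ge N (f : 'I_N -> C) : (forall j, 0 <= f j) ->
  0 <= \big[Order.max/0]_j f j /\ forall i, f i <= \big[Order.max/0]_j f j.
Proof.
move=> f0.
have Hg (P : pred 'I_N) : 0 <= \big[Order.max/0]_(j | P j) f j.
  elim/big_ind: _ => // x y x0 y0.
  by rewrite comparable_maxEge ?real_comparable ?ger0_real //; case: ifP.
split; first exact: Hg.
have Hr (r : seq 'I_N) i : i \in r -> f i <= \big[Order.max/0]_(j <- r) f j.
  elim: r => // x r IH; rewrite in_cons big_cons => /orP [/eqP ->|ir].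
    by rewrite comparable_le_max ?lexx // real_comparable ?ger0_real //;
      elim/big_ind: _ => // a b a0 b0;
      rewrite comparable_maxEge ?real_comparable ?ger0_real //; case: ifP.
  have g0 : 0 <= \big[Order.max/0]_(j <- r) f j.
    by elim/big_ind: _ => // a b a0 b0;
      rewrite comparable_maxEge ?real_comparable ?ger0_real //; case: ifP.
  by rewrite comparable_le_max ?IH ?orbT // real_comparable ?ger0_real.
by move=> i; apply: Hr; rewrite mem_index_enum.
Qed.

Lemma vnormZ N (k : C) (x : 'cV[C]_N) : vnorm (k *: x) = `|k| * vnorm x.
Proof.
rewrite /vnorm; under eq_bigr do rewrite mxE normrM exprMn.
rewrite -mulr_sumr sqrtCM ?nnegrE ?exprn_ge0 ?sumr_ge0 //.
  by rewrite sqrCK.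
by move=> i _; rewrite exprn_ge0.
Qed.

Lemma conj_apply N (V : 'M[C]_N) (D : 'M[C]_N) (x : 'cV[C]_N) :
  V ^t* *m V = 1%:M -> V *m D *m V ^t* *m (V *m x) = V *m (D *m x).
Proof.
move=> HV; by rewrite !mulmxA -(mulmxA _ (V ^t*)) HV mulmx1 -mulmxA.
Qed.

Lemma conj_mul N (V : 'M[C]_N) (D E : 'M[C]_N) :
  V ^t* *m V = 1%:M -> V *m D *m V ^t* *m (V *m E *m V ^t*) = V *m (D *m E) *m V ^t*.
Proof.
move=> HV; by rewrite !mulmxA -(mulmxA _ (V ^t*)) HV mulmx1 -(mulmxA V D E).
Qed.

End Aux.
Section Aux2.
Variable C : numClosedFieldType.

Lemma m_pos (e : C) : 0 < e -> e <= 1 -> 0 < 1 - e / 4.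
Proof.
move=> e0 e1; rewrite subr_gt0 ltr_pdivrMr ?ltr0n // mul1r.
by apply: le_lt_trans e1 _; rewrite ltr1n.
Qed.

Lemma t_bound (g e l lb : C) : 0 < g -> 0 < e -> e <= 1 ->
  l \is Num.real -> lb \is Num.real -> l != 0 ->
  `|lb - l| <= `|l| / 4 * e ->
  (1 - e / 4) <= hfun g lb / hfun g l <= (1 - e / 4)^-1.
Proof.
move=> g0 e0 e1 lr lbr l0 Hd.
have m0 := m_pos e0 e1.
set m := 1 - e / 4 in m0 *.
have er : e \is Num.real by rewrite gtr0_real.
set q := lb / l.
have Hq : lb = q * l by rewrite /q divfK.
have qr : q \is Num.real by rewrite realM ?realV.
have Hq1 : `|q - 1| <= e / 4.
  have -> : q - 1 = (lb - l) / l by rewrite /q; field.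
  rewrite normrM normfV ler_pdivrMr ?normr_gt0 //.
  by apply: le_trans Hd _; rewrite (_ : `|l| / 4 * e = e / 4 * `|l|) //; ring.
move: Hq1; rewrite real_ler_distl ?rpredB ?rpred1 // => /andP [qm qM].
have q0 : 0 < q by apply: lt_le_trans qm.
have X0 : 0 <= l ^+ 2 by rewrite -realEsqr.
have sg0 : 0 < sqrtC g by rewrite sqrtC_gt0.
have Dpos : 0 < q ^+ 2 * l ^+ 2 + g.
  by apply: ltr_wpDl => //; rewrite mulr_ge0 // -realEsqr.
have Lpos : 0 < l ^+ 2 + g by apply: ltr_wpDl.
have Eh : hfun g lb / hfun g l = q * (l ^+ 2 + g) / (q ^+ 2 * l ^+ 2 + g).
  rewrite /hfun Hq; field.
  by rewrite exprMn (gt_eqF Dpos) (gt_eqF Lpos) l0 (gt_eqF sg0).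
have mq1 : 0 <= 1 - m * q.
  rewrite subr_ge0; apply: le_trans (ler_wpM2l (ltW m0) qM) _.
  have -> : m * (1 + e / 4) = 1 - (e / 4) ^+ 2 by rewrite /m; ring.
  by rewrite gerBl -realEsqr rpredM ?rpredV ?realn.
have qm0 : 0 <= q - m by rewrite subr_ge0.
have q0' : 0 <= q := ltW q0.
have g0' : 0 <= g := ltW g0.
rewrite Eh; apply/andP; split.
  rewrite ler_pdivlMr // -subr_ge0.
  have -> : q * (l ^+ 2 + g) - m * (q ^+ 2 * l ^+ 2 + g) =
     l ^+ 2 * q * (1 - m * q) + g * (q - m) by ring.
  by apply: addr_ge0; apply: mulr_ge0 => //; apply: mulr_ge0.
rewrite ler_pdivrMr // [X in _ <= X]mulrC ler_pdivlMr // -subr_ge0.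
have -> : q ^+ 2 * l ^+ 2 + g - q * (l ^+ 2 + g) * m =
     l ^+ 2 * q * (q - m) + g * (1 - m * q) by ring.
by apply: addr_ge0; apply: mulr_ge0 => //; apply: mulr_ge0.
Qed.

Lemma e_ineq1 (e : C) : 0 < e -> e <= 1 -> 1 - e <= (1 - e / 4) ^+ 2.
Proof.
move=> e0 e1; rewrite -subr_ge0.
have -> : (1 - e / 4) ^+ 2 - (1 - e) = e / 2 + (e / 4) ^+ 2 by field.
apply: addr_ge0; first by rewrite divr_ge0 // ltW.
by rewrite -realEsqr rpredM ?rpredV ?gtr0_real.
Qed.

Lemma e_ineq2 (e : C) : 0 < e -> e <= 1 -> ((1 - e / 4) ^+ 2)^-1 <= 1 + e.
Proof.
move=> e0 e1; have m0 := m_pos e0 e1.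
rewrite -[X in X <= _]mul1r ler_pdivrMr ?exprn_gt0 // -subr_ge0.
have -> : (1 + e) * (1 - e / 4) ^+ 2 - 1 = e / 16 * (7 * (1 - e) + 1 + e ^+ 2) by field.
apply: mulr_ge0; first by rewrite divr_ge0 ?ltW.
apply: addr_ge0; last by rewrite -realEsqr gtr0_real.
by apply: addr_ge0 => //; apply: mulr_ge0; rewrite ?subr_ge0.
Qed.

Lemma spec_bound N (lam : 'I_N -> C) i e : (forall j, lam j != 0) -> 0 < e ->
  specnorm lam / (4%:R * condnum lam) * e <= `|lam i| / 4 * e.
Proof.
move=> l0 e0; rewrite /condnum.
set s := specnorm lam; set s' := specnorm (fun j => (lam j)^-1).
have [_ Hs] := @bigmax_ge C N (fun j => `|lam j|) (fun j => normr_ge0 _).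
have [_ Hs'] := @bigmax_ge C N (fun j => `|(lam j)^-1|) (fun j => normr_ge0 _).
have li0 : 0 < `|lam i| by rewrite normr_gt0.
have s0 : 0 < s by apply: lt_le_trans li0 (Hs i).
have lv0 : 0 < `|(lam i)^-1| by rewrite normr_gt0 invr_eq0.
have s'0 : 0 < s' by apply: lt_le_trans lv0 (Hs' i).
have -> : s / (4%:R * (s * s')) = s'^-1 / 4.
  by field; rewrite !gt_eqF.
apply: ler_wpM2r; first exact: ltW e0.
rewrite ler_pM2r ?invr_gt0 ?ltr0n //.
rewrite -[X in _ <= X]invrK lef_pV2 ?posrE ?invr_gt0 //.
by move: (Hs' i); rewrite normfV.
Qed.

End Aux2.

Theorem mainTheorem3 (C : numClosedFieldType) (N : nat)
  (F V : 'M[C]_N) (lam : 'I_N -> C) (gamma eps : C)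
  (y : 'cV[C]_N) (beta : 'I_N -> C) (lamb : 'I_N -> C) :
  F \in unitmx ->
  F ^t* = F ->
  V \is unitarymx ->
  (forall i, lam i \is Num.real) ->
  F = \sum_(i < N) lam i *: (col i V *m (col i V) ^t*) ->
  0 < gamma -> 0 < eps -> eps <= 1 ->
  vnorm y = 1 ->
  y = \sum_(i < N) beta i *: col i V ->
  (forall i, lamb i \is Num.real) ->
  (forall i, `|lamb i - lam i| <= specnorm lam / (4%:R * condnum lam) * eps) ->
  let u := \sum_(i < N) (beta i * hfun gamma (lamb i)) *: col i V in
  let us := \sum_(i < N) (beta i * hfun gamma (lam i)) *: col i V in
  let w := (vnorm u)^-1 *: u in
  let ws := (vnorm us)^-1 *: us in
  let z := invmx (F ^t* *m F + gamma%:M) *m F ^t* *m y in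
  [/\ vnorm u != 0, vnorm us != 0, vnorm z != 0,
      ws = (vnorm z)^-1 *: z
    & vnorm (w - ws) <= eps].
Proof.
move=> Fu Fh Vu lr HF g0 e0 e1 ny Hy lbr Hlb u us w ws z.
have HVV' : V *m V ^t* = 1%:M := unitarymxP Vu.
have HVV : V ^t* *m V = 1%:M := mulmx1C HVV'.
rewrite spec_mx in HF.
have l0 : forall i, lam i != 0.
  move: Fu; rewrite HF !unitmx_mul => /andP [/andP [_ HD] _].
  move: HD; rewrite unitmxE det_diag unitfE => /prodf_neq0 H i.
  by have := H i isT; rewrite mxE.
rewrite cmbE in Hy.
have Hb1 : \sum_i `|beta i| ^+ 2 = 1.
  move: ny; rewrite Hy vnorm_unitary // vnorm_cv => H.
  by rewrite -[LHS]sqrtCK H expr1n.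
have sg0 : 0 < sqrtC gamma by rewrite sqrtC_gt0.
have Lpos : forall x : C, x \is Num.real -> 0 < x ^+ 2 + gamma.
  by move=> x xr; apply: ltr_wpDl => //; rewrite -realEsqr.
have hr : forall x : C, x \is Num.real -> hfun gamma x \is Num.real.
  move=> x xr; rewrite /hfun; apply: rpredM; first by rewrite rpredM // gtr0_real.
  by rewrite rpredV rpredD ?rpredX // gtr0_real.
have h0 : forall i, hfun gamma (lam i) != 0.
  by move=> i; rewrite /hfun !mulf_neq0 ?invr_eq0 ?(gt_eqF sg0) ?(gt_eqF (Lpos _ (lr i))) ?l0.
pose b i := beta i * hfun gamma (lam i).
pose a i := beta i * hfun gamma (lamb i).
pose t i := hfun gamma (lamb i) / hfun gamma (lam i).
have Ea : forall i, a i = b i * t i.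
  by move=> i; rewrite /a /b /t -mulrA (mulrC (hfun gamma (lam i))) divfK.
have Eu : u = V *m cv a by rewrite /u cmbE.
have Eus : us = V *m cv b by rewrite /us cmbE.
set m := 1 - eps / 4.
have m0 : 0 < m := m_pos e0 e1.
have tb : forall i, m <= t i <= m^-1.
  move=> i; apply: t_bound => //.
  by apply: le_trans (Hlb i) _; apply: spec_bound.
have tr : forall i, t i \is Num.real by move=> i; rewrite rpredM ?rpredV ?hr.
pose B := \sum_i `|b i| ^+ 2.
pose A := \sum_i `|a i| ^+ 2.
have B0 : 0 <= B by apply: sumr_ge0 => i _; rewrite exprn_ge0.
have Bpos : 0 < B.
  rewrite lt0r B0 andbT; apply/negP => /eqP Hs.
  have H := psumr_eq0P (fun i _ => exprn_ge0 2 (normr_ge0 (b i))) Hs.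
  move: Hb1; rewrite big1 => [/eqP|i _]; first by rewrite eq_sym oner_eq0.
  have := H i isT.
  rewrite /b normrM exprMn => /eqP; rewrite mulf_eq0 => /orP [/eqP //|].
  by rewrite expf_eq0 /= normr_eq0 (negbTE (h0 i)).
have EA : A = \sum_i `|b i| ^+ 2 * t i ^+ 2.
  by rewrite /A; apply: eq_bigr => i _; rewrite Ea normrM exprMn (real_normK (tr i)).
have t0 : forall i, 0 <= t i.
  by move=> i; case/andP: (tb i) => H _; apply: le_trans H; rewrite ltW.
have mi0 : 0 < m^-1 by rewrite invr_gt0.
have Alow : m ^+ 2 * B <= A.
  rewrite EA mulr_sumr; apply: ler_sum => i _; rewrite mulrC.
  apply: ler_wpM2l; first by rewrite exprn_ge0.
  by rewrite ler_pXn2r // ?nnegrE ?(ltW m0) ?t0 //; case/andP: (tb i).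
have Aup : A <= (m^-1) ^+ 2 * B.
  rewrite EA mulr_sumr; apply: ler_sum => i _; rewrite [X in _ <= X]mulrC.
  apply: ler_wpM2l; first by rewrite exprn_ge0.
  by rewrite ler_pXn2r // ?nnegrE ?(ltW mi0) ?t0 //; case/andP: (tb i).
have Apos : 0 < A by apply: lt_le_trans Alow; rewrite mulr_gt0 ?exprn_gt0.
have vu : vnorm u = sqrtC A by rewrite Eu vnorm_unitary // vnorm_cv.
have vus : vnorm us = sqrtC B by rewrite Eus vnorm_unitary // vnorm_cv.
have sA0 : 0 < sqrtC A by rewrite sqrtC_gt0.
have sB0 : 0 < sqrtC B by rewrite sqrtC_gt0.
pose c i := beta i * lam i / (lam i ^+ 2 + gamma).
pose M := F ^t* *m F + gamma%:M.
have EM : M = V *m diag_mx (\row_i (lam i ^+ 2 + gamma)) *m V ^t*.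
  rewrite /M Fh {1 2}HF conj_mul //.
  have -> : gamma%:M = V *m gamma%:M *m V ^t* :> 'M[C]_N.
    by rewrite mul_mx_scalar -scalemxAl HVV' scalemx1.
  rewrite -mulmxDl -mulmxDr mulmx_diag; congr (V *m _ *m _).
  by apply/matrixP => i j; rewrite !mxE -mulrnDl expr2.
have Mu : M \in unitmx.
  have VtU : V ^t* \in unitmx by apply: unitarymx_unit; rewrite trmxC_unitary.
  rewrite EM !unitmx_mul unitarymx_unit // VtU andbT /=.
  rewrite unitmxE det_diag unitfE; apply/prodf_neq0 => i _.
  by rewrite mxE gt_eqF ?Lpos.
have Ez : z = V *m cv c.
  have FyE : F ^t* *m y = M *m (V *m cv c).
    rewrite Fh {1}Hy EM {1}HF !conj_apply //; congr (V *m _).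
    apply/matrixP => i k; rewrite !mul_diag_mx !mxE /c; field.
    by rewrite gt_eqF ?Lpos.
  by rewrite /z -mulmxA FyE mulKmx.
have Ezs : us = sqrtC gamma *: z.
  rewrite Eus Ez scalemxAr; congr (V *m _).
  by apply/matrixP => i k; rewrite !mxE /b /c /hfun; ring.
have vz : vnorm us = sqrtC gamma * vnorm z.
  by rewrite Ezs vnormZ ger0_norm ?ltW.
have vus0 : vnorm us != 0 by rewrite vus gt_eqF.
have vz0 : vnorm z != 0.
  by apply: contra vus0; rewrite vz => /eqP ->; rewrite mulr0.
split => //; first by rewrite vu gt_eqF.
  rewrite /ws vz Ezs scalerA; congr (_ *: _).
  by field; rewrite vz0 gt_eqF.
have m0' := ltW m0.
have mi0' := ltW mi0.
have A0' := ltW Apos.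
have e0' := ltW e0.
have sA0' := ltW sA0.
have sB0' := ltW sB0.
have sAup : sqrtC A <= m^-1 * sqrtC B.
  have : sqrtC A <= sqrtC ((m^-1) ^+ 2 * B).
    by rewrite ler_sqrtC // nnegrE // mulr_ge0 ?exprn_ge0.
  by rewrite sqrtCM ?nnegrE ?exprn_ge0 // sqrCK.
have sAlow : m * sqrtC B <= sqrtC A.
  have : sqrtC (m ^+ 2 * B) <= sqrtC A.
    by rewrite ler_sqrtC // nnegrE // mulr_ge0 ?exprn_ge0.
  by rewrite sqrtCM ?nnegrE ?exprn_ge0 // sqrCK.
have sb : m <= sqrtC B / sqrtC A <= m^-1.
  apply/andP; split.
    rewrite ler_pdivlMr //; apply: le_trans (ler_wpM2l (ltW m0) sAup) _.
    by rewrite mulrA mulfV ?gt_eqF // mul1r.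
  rewrite ler_pdivrMr //; apply: le_trans _ (ler_wpM2l (ltW mi0) sAlow).
  by rewrite mulrA mulVf ?gt_eqF // mul1r.
have Ewd : w - ws = V *m ((sqrtC A)^-1 *: cv a - (sqrtC B)^-1 *: cv b).
  by rewrite /w /ws vu vus Eu Eus mulmxBr !scalemxAr.
rewrite Ewd vnorm_unitary // /vnorm.
rewrite -(sqrCK (ltW e0)) ler_sqrtC ?nnegrE ?exprn_ge0 //; last first.
  by apply: sumr_ge0 => i _; rewrite exprn_ge0.
apply: le_trans (_ : _ <= \sum_i `|b i| ^+ 2 * (eps ^+ 2 / B)) _; last first.
  by rewrite -mulr_suml -/B mulrCA divff ?gt_eqF // mulr1.
apply: ler_sum => i _; rewrite !mxE Ea.
have -> : (sqrtC A)^-1 * (b i * t i) - (sqrtC B)^-1 * b i =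
    b i * ((t i * (sqrtC B / sqrtC A) - 1) / sqrtC B).
  by field; rewrite !gt_eqF.
rewrite normrM exprMn; apply: ler_wpM2l; first exact: exprn_ge0.
have -> : eps ^+ 2 / B = (eps / sqrtC B) ^+ 2 by rewrite expr_div_n sqrtCK.
rewrite ler_pXn2r // ?nnegrE ?normr_ge0 ?divr_ge0 //.
rewrite normrM normfV (ger0_norm (ltW sB0)) ler_pM2r ?invr_gt0 //.
have sAr : sqrtC A \is Num.real by rewrite sqrtC_real.
have sBr : sqrtC B \is Num.real by rewrite sqrtC_real.
have s0 : 0 <= sqrtC B / sqrtC A by rewrite divr_ge0.
case/andP: sb => sb1 sb2; case/andP: (tb i) => tb1 tb2.
rewrite real_ler_distl; last by rewrite rpredB ?rpred1 // rpredM ?tr // rpredM // rpredV.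
apply/andP; split.
  apply: le_trans (e_ineq1 e0 e1) _; rewrite -/m expr2.
  by apply: ler_pM.
apply: le_trans (e_ineq2 e0 e1); rewrite -/m -exprVn expr2.
by apply: ler_pM.
Qed.
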